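(* Let $d$ be an odd integer, $d\ge 3$, and let $G=\langle\sigma,\tau\rangle$ be the dihedral group with $\tau$ of order $d$, $\sigma$ of order $2$ and $\sigma\tau=\tau^{-1}\sigma$. In $\mathbb{Z}[G]$ put $T_\sigma=1+\sigma$, $T_\tau=\sum_{i=0}^{d-1}\tau^i$, $\mathcal{B}=1-\sigma\tau$, and consider the left ideals (left $\mathbb{Z}[G]$-modules) $M_1=\mathbb{Z}[G]T_\sigma T_\tau$, $M_2=\mathbb{Z}[G]T_\sigma$, $M_3=\mathbb{Z}[G]\mathcal{B}$, $M_4=\mathbb{Z}[G]\mathcal{B}T_\tau$, with maps $d_1:M_1\to M_2$ the inclusion, $d_2:M_2\to M_3$, $x\mapsto x(1-\tau)$, $d_3:M_3\to M_4$, $x\mapsto xT_\tau$, and homotopies $h_1:M_2\to M_1$, $x\mapsto xT_\tau$, $h_2:M_3\to M_2$ given by $h_2(x\mathcal{B})=x\sum_{i=0}^{d-1}\big(\tfrac{d-1}{2}-i\big)\tau^iT_\sigma$ for $x\in\mathbb{Z}[G]$, and $h_3:M_4\to M_3$ the inclusion. Then $0\to M_1\xrightarrow{d_1}M_2\xrightarrow{d_2}M_3\xrightarrow{d_3}M_4\to0$ is exact, all of $d_1,d_2,d_3,h_1,h_2,h_3$ are well-defined $\mathbb{Z}[G]$-module homomorphisms, and the prism conditions hold: $h_1d_1=d\cdot\mathrm{id}_{M_1}$, $d_1h_1+h_2d_2=d\cdot\mathrm{id}_{M_2}$, $d_2h_2+h_3d_3=d\cdot\mathrm{id}_{M_3}$,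 $d_3h_3=d\cdot\mathrm{id}_{M_4}$. *)

(* Defs.v *)
(* Integral group ring Z[G] of a finite group gT, realised as
   integer-valued finite functions on gT with convolution product. *)
From HB Require Import structures.
From mathcomp Require Import all_boot all_order all_algebra all_fingroup.
Set Implicit Arguments. Unset Strict Implicit. Unset Printing Implicit Defensive.
Import GRing.Theory Num.Theory.
Local Open Scope ring_scope.

Notation ZG gT := {ffun gT -> int}.

Definition gelt (gT : finGroupType) (g : gT) : ZG gT :=
  [ffun x => ((x == g) : nat)%:Z].

Definition gmul (gT : finGroupType) (a b : ZG gT) : ZG gT :=
  [ffun g => \sum_(h : gT) a h * b ((h^-1 * g)%g)].

Definition lideal (gT : finGroupType) (b : ZG gT) (x : ZG gT) : Prop :=
  exists y : ZG gT, x = gmul y b.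

Definition ZGhom (gT : finGroupType) (A B : ZG gT -> Prop) (f : ZG gT -> ZG gT)
  : Prop :=
  (forall x, A x -> B (f x)) /\
  (forall a x y, A x -> A y -> f (gmul a x + y) = gmul a (f x) + f y).

Section Elements.
Variables (gT : finGroupType) (d : nat) (sigma tau : gT).
Definition Tsig : ZG gT := gelt 1%g + gelt sigma.
Definition Ttau : ZG gT := \sum_(i < d) gelt (tau ^+ i)%g.
Definition Bel : ZG gT := gelt 1%g - gelt (sigma * tau)%g.
Definition Kel : ZG gT :=
  \sum_(i < d) (gmul (gelt (tau ^+ i)%g) Tsig) *~ (((d.-1)./2)%:Z - (i : nat)%:Z).
End Elements.

(* Main.v *)
Require Import Defs.
From mathcomp Require Import all_boot all_order all_algebra all_fingroup.
From mathcomp Require Import cyclic zify.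
From Stdlib Require Import ClassicalEpsilon.
Set Implicit Arguments. Unset Strict Implicit. Unset Printing Implicit Defensive.
Import GRing.Theory Num.Theory.
Local Open Scope ring_scope.

Lemma geltE (gT : finGroupType) (g x : gT) : gelt g x = ((x == g) : nat)%:Z.
Proof. by rewrite ffunE. Qed.

Lemma gmulE (gT : finGroupType) (a b : ZG gT) g :
  gmul a b g = \sum_(h : gT) a h * b ((h^-1 * g)%g).
Proof. by rewrite ffunE. Qed.

Lemma gmul_gelt_r (gT : finGroupType) (a : ZG gT) h g :
  gmul a (gelt h) g = a (g * h^-1)%g.
Proof.
rewrite gmulE (bigD1 (g * h^-1)%g) //= geltE invMg invgK -mulgA mulVg mulg1 eqxx mulr1.
rewrite big1 ?addr0 // => k hk; rewrite geltE.
case: eqP => [e|]; last by rewrite mulr0.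
by move: hk; rewrite -e invMg invgK mulgA mulgV mul1g eqxx.
Qed.

Lemma gmul_gelt_l (gT : finGroupType) (b : ZG gT) h g :
  gmul (gelt h) b g = b (h^-1 * g)%g.
Proof.
rewrite gmulE (bigD1 h) //= geltE eqxx mul1r.
by rewrite big1 ?addr0 // => k hk; rewrite geltE (negbTE hk) mul0r.
Qed.

Lemma gelt_mul (gT : finGroupType) (g h : gT) :
  gmul (gelt g) (gelt h) = gelt (g * h)%g.
Proof.
apply/ffunP => k; rewrite gmul_gelt_l !geltE.
have -> : (g^-1 * k == h)%g = (k == g * h)%g.
  by apply/eqP/eqP => [<-|->]; [rewrite mulKVg | rewrite mulKg].
by [].
Qed.

Lemma gmul1l (gT : finGroupType) (x : ZG gT) : gmul (gelt 1%g) x = x.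
Proof. by apply/ffunP => k; rewrite gmul_gelt_l invg1 mul1g. Qed.

Lemma gmul1r (gT : finGroupType) (x : ZG gT) : gmul x (gelt 1%g) = x.
Proof. by apply/ffunP => k; rewrite gmul_gelt_r invg1 mulg1. Qed.

Lemma gmulA (gT : finGroupType) (a b c : ZG gT) :
  gmul (gmul a b) c = gmul a (gmul b c).
Proof.
apply/ffunP => g; rewrite !gmulE.
under eq_bigr do rewrite gmulE mulr_suml.
rewrite exchange_big /=; apply: eq_bigr => h _.
rewrite gmulE mulr_sumr (reindex_inj (mulgI h)) /=.
apply: eq_bigr => k _; rewrite mulKg mulrA; congr (_ * _ * c _).
by rewrite invMg mulgA.
Qed.

Lemma gmulDl (gT : finGroupType) (a b c : ZG gT) :
  gmul (a + b) c = gmul a c + gmul b c.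
Proof.
apply/ffunP => g; rewrite !ffunE -big_split /=; apply: eq_bigr => h _.
by rewrite ffunE mulrDl.
Qed.

Lemma gmulDr (gT : finGroupType) (a b c : ZG gT) :
  gmul a (b + c) = gmul a b + gmul a c.
Proof.
apply/ffunP => g; rewrite !ffunE -big_split /=; apply: eq_bigr => h _.
by rewrite ffunE mulrDr.
Qed.

Lemma gmul0l (gT : finGroupType) (c : ZG gT) : gmul 0 c = 0.
Proof. by apply/ffunP => g; rewrite !ffunE big1 // => h _; rewrite ffunE mul0r. Qed.

Lemma gmul0r (gT : finGroupType) (c : ZG gT) : gmul c 0 = 0.
Proof. by apply/ffunP => g; rewrite !ffunE big1 // => h _; rewrite ffunE mulr0. Qed.

Lemma gmulNl (gT : finGroupType) (a c : ZG gT) : gmul (- a) c = - gmul a c.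
Proof. by apply/eqP; rewrite -subr_eq0 opprK -gmulDl addNr gmul0l. Qed.

Lemma gmulNr (gT : finGroupType) (a c : ZG gT) : gmul c (- a) = - gmul c a.
Proof. by apply/eqP; rewrite -subr_eq0 opprK -gmulDr addNr gmul0r. Qed.

Lemma gmulBl (gT : finGroupType) (a b c : ZG gT) :
  gmul (a - b) c = gmul a c - gmul b c.
Proof. by rewrite gmulDl gmulNl. Qed.

Lemma gmulBr (gT : finGroupType) (a b c : ZG gT) :
  gmul a (b - c) = gmul a b - gmul a c.
Proof. by rewrite gmulDr gmulNr. Qed.

Lemma gmul_suml (gT : finGroupType) I (r : seq I) (P : pred I) (F : I -> ZG gT) c :
  gmul (\sum_(i <- r | P i) F i) c = \sum_(i <- r | P i) gmul (F i) c.
Proof.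
elim/big_rec2: _ => [|i y1 y2 _ <-]; first by rewrite gmul0l.
by rewrite gmulDl.
Qed.

Lemma gmul_sumr (gT : finGroupType) I (r : seq I) (P : pred I) (F : I -> ZG gT) c :
  gmul c (\sum_(i <- r | P i) F i) = \sum_(i <- r | P i) gmul c (F i).
Proof.
elim/big_rec2: _ => [|i y1 y2 _ <-]; first by rewrite gmul0r.
by rewrite gmulDr.
Qed.

Lemma gmulzl (gT : finGroupType) (a c : ZG gT) (n : int) :
  gmul (a *~ n) c = (gmul a c) *~ n.
Proof.
apply/ffunP => g; rewrite ffunMzE !gmulE mulrzz mulr_suml; apply: eq_bigr => h _.
by rewrite ffunMzE mulrzz mulrAC.
Qed.

Lemma gmulzr (gT : finGroupType) (a c : ZG gT) (n : int) :
  gmul c (a *~ n) = (gmul c a) *~ n.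
Proof.
apply/ffunP => g; rewrite ffunMzE !gmulE mulrzz mulr_suml; apply: eq_bigr => h _.
by rewrite ffunMzE mulrzz mulrA.
Qed.

Lemma gmulnl (gT : finGroupType) (a c : ZG gT) (n : nat) :
  gmul (a *+ n) c = (gmul a c) *+ n.
Proof. by rewrite !pmulrn gmulzl. Qed.

Lemma gmulnr (gT : finGroupType) (a c : ZG gT) (n : nat) :
  gmul c (a *+ n) = (gmul c a) *+ n.
Proof. by rewrite !pmulrn gmulzr. Qed.
Definition rep (gT : finGroupType) (t g : gT) := repr (g *: <[t]>)%g.
Definition idx (gT : finGroupType) (t g : gT) : nat :=
  find (fun i => g == (rep t g * t ^+ i)%g) (iota 0 #[t]%g).

Lemma rep_mul (gT : finGroupType) (t g h : gT) : h \in <[t]>%g -> rep t (g * h)%g = rep t g.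
Proof. by move=> hh; rewrite /rep lcosetM (lcoset_id hh). Qed.

Lemma rep_exp (gT : finGroupType) (t g : gT) :
  exists2 i, (i < #[t]%g)%N & g = (rep t g * t ^+ i)%g.
Proof.
have : rep t g \in (g *: <[t]>)%g by apply: mem_repr (lcoset_refl _ _).
rewrite mem_lcoset => /(groupVr) /cycleP [j]; rewrite invMg invgK => hj.
exists (j %% #[t]%g)%N; first by rewrite ltn_pmod // order_gt0.
by rewrite expg_mod_order -hj mulKVg.
Qed.

Lemma exp_inj (gT : finGroupType) (t r : gT) i j : (i < #[t]%g)%N -> (j < #[t]%g)%N ->
  (r * t ^+ i = r * t ^+ j)%g -> i = j.
Proof.
move=> hi hj /mulgI /eqP; rewrite eq_expg_mod_order !modn_small //; exact/eqP.
Qed.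

Lemma idxP (gT : finGroupType) (t g : gT) :
  (idx t g < #[t]%g)%N /\ g = (rep t g * t ^+ idx t g)%g.
Proof.
have [i hi e] := rep_exp t g.
have hh : has (fun i => g == (rep t g * t ^+ i)%g) (iota 0 #[t]%g).
  by apply/hasP; exists i; [rewrite mem_iota | rewrite -e].
have := has_find (fun i => g == (rep t g * t ^+ i)%g) (iota 0 #[t]%g); rewrite hh; rewrite size_iota => hlt; split => //.
have := nth_find 0%N hh; rewrite nth_iota // add0n => /eqP; done.
Qed.

Lemma idx_uniq (gT : finGroupType) (t g : gT) i : (i < #[t]%g)%N ->
  g = (rep t g * t ^+ i)%g -> idx t g = i.
Proof.
move=> hi e; have [h1 h2] := idxP t g.
apply: (exp_inj (r := rep t g) h1 hi); by rewrite -h2 -e.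
Qed.

Lemma constP (gT : finGroupType) (t : gT) (x : ZG gT) :
  (forall g, x (g * t)%g = x g) -> forall g k, x (g * t ^+ k)%g = x g.
Proof.
move=> h g; elim => [|k ih]; first by rewrite expg0 mulg1.
by rewrite expgSr mulgA h.
Qed.

Lemma modarith n i k : (i < n)%N -> (k < n)%N -> (0 = (i + k) %% n)%N -> (k = (n - i) %% n)%N.
Proof.
move=> hi hk.
case: (ltnP (i+k)%N n) => h.
  rewrite modn_small // => e.
  have -> : i = 0%N by lia.
  rewrite subn0 modnn; lia.
have -> : (i + k = (i + k - n) + n)%N by lia.
rewrite modnDr modn_small; last by lia.
move=> e; rewrite modn_small; lia.
Qed.

Lemma L1gen (gT : finGroupType) (t : gT) (x : ZG gT) :
  (forall g, x (g * t)%g = x g) ->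
  exists u : ZG gT, forall g, \sum_(k < #[t]%g) u (g * t ^+ k)%g = x g.
Proof.
move=> hx; exists [ffun g => if rep t g == g then x g else 0] => g.
have [hi e] := idxP t g; set r := rep t g in e *; set i := idx t g in hi e *.
have hn : (0 < #[t]%g)%N by rewrite order_gt0.
pose k0 : 'I_#[t]%g := Ordinal (ltn_pmod (#[t]%g - i)%N hn).
rewrite (eq_bigr (fun k => if k == k0 then x g else 0)).
  by rewrite -big_mkcond big_pred1_eq.
move=> k _; rewrite ffunE rep_mul ?mem_cycle // -/r constP //.
have -> : (r == g * t ^+ k)%g = (k == k0).
  rewrite {1}e -mulgA -expgD -{1}(mulg1 r).
  apply/eqP/eqP => [/mulgI /esym /eqP|->].
    rewrite -(expg0 t) eq_expg_mod_order mod0n => /eqP hm.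
    by apply/val_inj => /=; apply: modarith hi (ltn_ord k) (esym hm).
  rewrite /= -expg_mod_order modnDmr.
  have -> : (i + (#[t]%g - i) = #[t]%g)%N by lia.
  by rewrite modnn expg0.
by [].
Qed.

Lemma L2gen (gT : finGroupType) (t : gT) (x : ZG gT) :
  (forall g, \sum_(k < #[t]%g) x (g * t ^+ k)%g = 0) ->
  exists v : ZG gT, forall g, v g - v (g * t)%g = x g.
Proof.
move=> hx; exists [ffun g => - \sum_(k < idx t g) x (rep t g * t ^+ k)%g] => g.
rewrite !ffunE rep_mul ?cycle_id //.
have [hi e] := idxP t g; set r := rep t g in e *; set i := idx t g in hi e *.
have egt : (g * t = r * t ^+ i.+1)%g by rewrite {1}e expgSr mulgA.
case: (ltnP i.+1 #[t]%g) => hlt.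
  have -> : idx t (g * t)%g = i.+1.
    by apply: idx_uniq => //; rewrite rep_mul ?cycle_id // -/r.
  by rewrite big_ord_recr /= -e opprK addKr.
have hn : i.+1 = #[t]%g by apply/eqP; rewrite eqn_leq hlt hi.
have egr : (g * t)%g = r by rewrite egt hn expg_order mulg1.
have -> : idx t (g * t)%g = 0%N.
  by apply: idx_uniq; rewrite ?order_gt0 // rep_mul ?cycle_id // -/r egr expg0 mulg1.
rewrite big_ord0 oppr0 subr0.
have := hx r; rewrite -hn big_ord_recr /= => /eqP; rewrite addr_eq0 => /eqP ->.
by rewrite opprK -e.
Qed.

Lemma arithQ2 (bn m : nat) (x y : int) : bn%:Z * (m + 0)%:Z + (x - y) - (x + bn%:Z * (m%:Z - (m*2)%:Z)) = bn%:Z * ((m*2).+1)%:Z - (bn%:Z + y).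
Proof. nia. Qed.

Lemma arithQ3 (m i : nat) : (i < m.*2.+1)%N -> m%:Z - (m.*2.+1 - i.+1)%N%:Z = - (m%:Z - i%:Z).
Proof. rewrite -muln2 => h; lia. Qed.

Lemma int_eqN (a : int) : a = - a -> a = 0.
Proof. move=> h; lia. Qed.

Lemma zg_eqN (gT : finGroupType) (y : ZG gT) : y = - y -> y = 0.
Proof.
move=> e; apply/ffunP => g; have := congr1 (fun f : ZG gT => f g) e; rewrite !ffunE.
exact: int_eqN.
Qed.

Lemma evalB (gT : finGroupType) (y z : ZG gT) g : (y - z) g = y g - z g.
Proof. by rewrite !ffunE. Qed.

Lemma eval0 (gT : finGroupType) g : (0 : ZG gT) g = 0.
Proof. by rewrite !ffunE. Qed.

Unset Implicit Arguments.

Theorem theorem5p4 (gT : finGroupType) (d : nat) (sigma tau : gT)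
  (hd_odd : odd d) (hd3 : (3 <= d)%N)
  (htau : #[tau]%g = d) (hsig : #[sigma]%g = 2%N)
  (hrel : (sigma * tau = tau^-1 * sigma)%g)
  (hgen : <<[set sigma; tau]>>%g = [set: gT]) :
  let Ts := Tsig sigma in
  let Tt := Ttau d tau in
  let B := Bel sigma tau in
  let M1 := lideal (gmul Ts Tt) in
  let M2 := lideal Ts in
  let M3 := lideal B in
  let M4 := lideal (gmul B Tt) in
  let d1 := fun x : ZG gT => x in
  let d2 := fun x : ZG gT => gmul x (gelt 1%g - gelt tau) in
  let d3 := fun x : ZG gT => gmul x Tt in
  let h1 := fun x : ZG gT => gmul x Tt in
  let h3 := fun x : ZG gT => x in
  exists h2 : ZG gT -> ZG gT,
    (forall x, h2 (gmul x B) = gmul x (Kel d sigma tau)) /\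
    ZGhom M1 M2 d1 /\ ZGhom M2 M3 d2 /\ ZGhom M3 M4 d3 /\
    ZGhom M2 M1 h1 /\ ZGhom M3 M2 h2 /\ ZGhom M4 M3 h3 /\
    (forall x y, M1 x -> M1 y -> d1 x = d1 y -> x = y) /\
    (forall x, M2 x -> (d2 x = 0 <-> exists y, M1 y /\ d1 y = x)) /\
    (forall x, M3 x -> (d3 x = 0 <-> exists y, M2 y /\ d2 y = x)) /\
    (forall z, M4 z -> exists y, M3 y /\ d3 y = z) /\
    (forall x, M1 x -> h1 (d1 x) = x *+ d) /\
    (forall x, M2 x -> d1 (h1 x) + h2 (d2 x) = x *+ d) /\
    (forall x, M3 x -> d2 (h2 x) + h3 (d3 x) = x *+ d) /\
    (forall x, M4 x -> d3 (h3 x) = x *+ d).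
Proof.
have [m hdm] : exists m, d = m.*2.+1.
  by exists d./2; rewrite -{1}(odd_double_half d) hd_odd add1n.
rewrite hdm in htau *; clear hdm hd_odd hd3 d.
move=> Ts Tt B M1 M2 M3 M4 d1 d2 d3 h1 h3.
set d := m.*2.+1 in htau *.
have htd : (tau ^+ d = 1)%g by rewrite -htau expg_order.
have hss : (sigma * sigma = 1)%g by rewrite -{2}(expg1 sigma) -expgS -hsig expg_order.
have hsti : forall i, (sigma * tau ^+ i * sigma = (tau ^+ i)^-1)%g.
  move=> i; have := conjXg tau sigma i; rewrite !conjgE (invg2id hsig).
  have -> : (sigma * (tau * sigma) = tau^-1)%g by rewrite mulgA hrel -mulgA hss mulg1.
  by rewrite expVgn mulgA.
have hinv : forall i, (i <= d)%N -> ((tau ^+ i)^-1 = tau ^+ (d - i))%g.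
  by move=> i hi; apply/eqP; rewrite eq_invg_mul -expgD subnKC // htd.
have hrr : (sigma * tau * (sigma * tau) = 1)%g.
  by rewrite {1}hrel -!mulgA (mulgA sigma) hss mul1g mulVg.
have htst : (tau * sigma * tau = sigma)%g.
  by rewrite -mulgA hrel mulgA mulgV mul1g.
have G1 : gmul (gelt sigma) (gelt sigma) = gelt 1%g by rewrite gelt_mul hss.
have Gt : gmul (gelt tau) Tt = Tt.
  rewrite /Tt /Ttau gmul_sumr.
  under eq_bigr do rewrite gelt_mul -expgS.
  rewrite [RHS]big_ord_recl big_ord_recr /= expg0 addrC htd; congr (_ + _).
have Gt' : gmul Tt (gelt tau) = Tt.
  rewrite /Tt /Ttau gmul_suml.
  under eq_bigr do rewrite gelt_mul -expgSr.
  rewrite [RHS]big_ord_recl big_ord_recr /= expg0 addrC htd; congr (_ + _).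
have Gtk : forall k, gmul (gelt (tau ^+ k)%g) Tt = Tt.
  elim => [|k ih]; first by rewrite expg0 gmul1l.
  by rewrite expgS -gelt_mul gmulA ih Gt.
have Gtk' : forall k, gmul Tt (gelt (tau ^+ k)%g) = Tt.
  elim => [|k ih]; first by rewrite expg0 gmul1r.
  by rewrite expgSr -gelt_mul -gmulA ih Gt'.
have GTT : gmul Tt Tt = Tt *+ d.
  rewrite {1}/Tt /Ttau gmul_suml.
  under eq_bigr do rewrite Gtk.
  by rewrite sumr_const card_ord.
have GsTtS : gmul (gmul (gelt sigma) Tt) (gelt sigma) = Tt.
  rewrite /Tt /Ttau gmul_sumr gmul_suml.
  under eq_bigr do rewrite gelt_mul gelt_mul hsti.
  rewrite (reindex_inj rev_ord_inj) -[RHS]Gt gmul_sumr; apply: eq_bigr => i _.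
  rewrite gelt_mul -expgS /= hinv ?leq_subr // subKn //.
have GsT : gmul (gelt sigma) Tt = gmul Tt (gelt sigma).
  by rewrite -{2}GsTtS gmulA G1 gmul1r.
have TsE : Ts = gelt 1%g + gelt sigma by [].
have I1 : gmul Ts Tt = gmul Tt Ts.
  by rewrite TsE gmulDl gmulDr gmul1l gmul1r GsT.
have GTs : gmul Ts (gelt sigma) = Ts.
  by rewrite TsE gmulDl gmul1l G1 addrC.
have GsTs : gmul (gelt sigma) Ts = Ts.
  by rewrite TsE gmulDr gmul1r G1 addrC.
have BE : B = gelt 1%g - gelt (sigma * tau)%g by [].
have I2 : gmul Ts (gelt 1%g - gelt tau) = gmul Ts B.
  rewrite BE !gmulBr !gmul1r TsE !gmulDl !gelt_mul !mul1g mulgA hss mul1g.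
  by rewrite (addrC (gelt tau)).
have I3 : gmul B Tt = gmul Tt B.
  rewrite BE gmulBl gmulBr gmul1l gmul1r -gelt_mul gmulA Gt.
  by rewrite -[in RHS]gmulA -GsT gmulA Gt'.
have I4 : gmul Tt (gelt 1%g - gelt tau) = 0 by rewrite gmulBr gmul1r Gt' subrr.
have I4' : gmul (gelt 1%g - gelt tau) Tt = 0 by rewrite gmulBl gmul1l Gt subrr.
set c := fun i : nat => (m%:Z - i%:Z).
set Q := \sum_(i < d) (gelt (tau ^+ i)%g) *~ c i.
have HK : Kel d sigma tau = gmul Q Ts.
  have hm2 : (d.-1)./2 = m by rewrite /d /= doubleK.
  rewrite /Kel hm2 /Q gmul_suml; apply: eq_bigr => i _; by rewrite gmulzl.
set K := Kel d sigma tau in HK *.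
have Q1 : gmul (gelt tau) Q = gmul Q (gelt tau).
  rewrite /Q gmul_sumr gmul_suml; apply: eq_bigr => i _.
  by rewrite gmulzr gmulzl !gelt_mul -expgS -expgSr.
have Q2 : Q - gmul (gelt tau) Q = (gelt 1%g) *+ d - Tt.
  rewrite /Q gmul_sumr.
  have -> : \sum_(i < d) gmul (gelt tau) (gelt (tau ^+ i)%g *~ c i) = \sum_(i < d) gelt (tau ^+ i.+1)%g *~ c i.
    by apply: eq_bigr => i _; rewrite gmulzr gelt_mul -expgS.
  rewrite [X in X - _ = _]big_ord_recl [X in _ - X = _]big_ord_recr /Tt /Ttau [X in _ = _ - X]big_ord_recl /= !expg0 htd.
  have hS : \sum_(i < m.*2) gelt (tau ^+ bump 0 i)%g *~ c (bump 0 i) = \sum_(i < m.*2) gelt (tau ^+ i.+1)%g *~ c i - \sum_(i < m.*2) gelt (tau ^+ bump 0 i)%g.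
    rewrite -sumrB; apply: eq_bigr => i _.
    rewrite /bump leq0n add1n /c.
    have -> : (m%:Z - (i.+1)%:Z) = (m%:Z - i%:Z) + (-1) by lia.
    by rewrite mulrzDr mulrN1z.
  rewrite hS; apply/ffunP => g; rewrite !ffunE ffunMnE !ffunE !ffunMzE.
  rewrite !(ffunE, ffunMnE, ffunMzE, geltE) /c /d; move: (_ == _) => b; move: (\sum_(i < m.*2) _) => S1; move: (\sum_(i < m.*2) _) => S2. rewrite !pmulrn !mulrzz; move: (nat_of_bool b) => bn; rewrite -!muln2; exact: arithQ2.
have Q3 : gmul (gmul (gelt sigma) Q) (gelt sigma) = - gmul (gelt tau) Q.
  rewrite /Q gmul_sumr gmul_suml gmul_sumr -sumrN [LHS](reindex_inj rev_ord_inj).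
  apply: eq_bigr => i _.
  rewrite gmulzr gmulzl !gelt_mul hsti /= hinv ?leq_subr // subKn // gmulzr gelt_mul -expgS -mulrNz.
  by congr (_ *~ _); rewrite /c arithQ3.
have Q3X : forall X, gmul (gelt sigma) (gmul Q (gmul (gelt sigma) X)) = - gmul (gelt tau) (gmul Q X).
  by move=> X; rewrite -!gmulA Q3 gmulNl.
have Q3X' : forall X, gmul (gelt tau) (gmul Q X) = - gmul (gelt sigma) (gmul Q (gmul (gelt sigma) X)).
  by move=> X; rewrite Q3X opprK.
have K1 : gmul (gelt (sigma * tau)%g) K = - K.
  by rewrite HK -gelt_mul gmulA Q3X' gmulNr -gmulA G1 gmul1l GsTs.
have K2 : gmul Ts K = Ts *+ d - gmul Tt Ts.
  rewrite HK {1}TsE gmulDl gmul1l -{2}GsTs Q3X -gmulA -gmulBl Q2.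
  by rewrite gmulBl gmulnl gmul1l.
have QY : forall Y, gmul Q (gmul (gelt sigma) Y) = - gmul (gelt sigma) (gmul (gelt tau) (gmul Q Y)).
  by move=> Y; rewrite Q3X' gmulNr opprK -[RHS]gmulA G1 gmul1l.
have K3 : gmul K (gelt 1%g - gelt tau) + gmul B Tt = B *+ d.
  rewrite HK gmulA TsE gmulDl gmul1l gmulDr QY gmulBr gmul1r -Q1 Q2.
  rewrite -gmulA gelt_mul.
  have -> : forall W : ZG gT, W - gmul (gelt (sigma * tau)%g) W = gmul B W.
    by move=> W; rewrite BE gmulBl gmul1l.
  by rewrite gmulBr gmulnr gmul1r subrK.
have wd : forall x, gmul x B = 0 -> gmul x K = 0.
  move=> x; rewrite BE gmulBr gmul1r => /eqP; rewrite subr_eq0 => /eqP hxr.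
  apply: zg_eqN; by rewrite {1}hxr gmulA K1 gmulNr.
pose h2 := fun z : ZG gT => gmul (epsilon (inhabits (0 : ZG gT)) (fun y => z = gmul y B)) K.
have h2E : forall x, h2 (gmul x B) = gmul x K.
  move=> x; rewrite /h2; set y := epsilon _ _.
  have hy : gmul x B = gmul y B.
    apply: (epsilon_spec (inhabits (0 : ZG gT)) (fun y => gmul x B = gmul y B)).
    by exists x.
  apply/eqP; rewrite -subr_eq0 -gmulBl; apply/eqP/wd; by rewrite gmulBl -hy subrr.
exists h2; split; first exact: h2E.
split.
  split; last by [].
  by move=> x [y ->]; exists (gmul y Tt); rewrite I1 gmulA.
split.
  split; first by move=> x [y ->]; exists (gmul y Ts); rewrite /d2 gmulA I2 -gmulA.
  by move=> a x y _ _; rewrite /d2 gmulDl gmulA.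
split.
  split; first by move=> x [y ->]; exists y; rewrite /d3 gmulA.
  by move=> a x y _ _; rewrite /d3 gmulDl gmulA.
split.
  split; first by move=> x [y ->]; exists y; rewrite /h1 gmulA.
  by move=> a x y _ _; rewrite /h1 gmulDl gmulA.
split.
  split; first by move=> x [y ->]; exists (gmul y Q); rewrite h2E HK gmulA.
  move=> a x y [x' ->] [y' ->].
  by rewrite -gmulA -gmulDl !h2E gmulDl gmulA.
split.
  split; last by [].
  by move=> x [y ->]; exists (gmul y Tt); rewrite /h3 I3 gmulA.
split; first by move=> x y _ _.
split.
  move=> x [y hx]; split.
    rewrite /d2 => h0.
    have xt : gmul x (gelt tau) = x.
      by move: h0; rewrite gmulBr gmul1r => /eqP; rewrite subr_eq0 => /eqP.
    have hxt : forall g, x (g * tau^-1)%g = x g.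
      by move=> g; rewrite -gmul_gelt_r xt.
    have [u hu] := L1gen hxt.
    rewrite orderV htau in hu.
    have xuT : x = gmul u Tt.
      apply/ffunP => g; rewrite -hu /Tt /Ttau gmul_sumr sum_ffunE.
      by apply: eq_bigr => i _; rewrite gmul_gelt_r expVgn.
    have xs : gmul x (gelt sigma) = x by rewrite hx gmulA GTs.
    have xtk : forall k, gmul x (gelt (tau ^+ k)%g) = x.
      elim => [|k ih]; first by rewrite expg0 gmul1r.
      by rewrite expgSr -gelt_mul -gmulA ih xt.
    have xd : x *+ d = gmul y (gmul Ts Tt).
      rewrite -gmulA -hx /Tt /Ttau gmul_sumr.
      under eq_bigr do rewrite xtk.
      by rewrite sumr_const card_ord.
    have x2 : x *+ 2 = gmul u (gmul Ts Tt).
      by rewrite TsE gmulDl gmul1l GsT gmulDr -gmulA -xuT xs mulr2n.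
    exists x; split => //; exists (y - u *+ m).
    by rewrite gmulBl gmulnl -xd -x2 -mulrnA mul2n /d mulrS addrK.
  move=> [z [[w ->] <-]].
  by rewrite /d2 /d1 !gmulA I4 !gmul0r.
split.
  move=> x [y hx]; split.
    rewrite /d3 => h0.
    have hsum : forall g, \sum_(k < #[tau^-1]%g) x (g * (tau^-1) ^+ k)%g = 0.
      move=> g; rewrite orderV htau; have := congr1 (fun f : ZG gT => f g) h0.
      rewrite /Tt /Ttau gmul_sumr sum_ffunE eval0 => e; rewrite -[RHS]e.
      by apply: eq_bigr => i _; rewrite gmul_gelt_r expVgn.
    have [v hv] := L2gen hsum.
    have xv : x = gmul v (gelt 1%g - gelt tau).
      by apply/ffunP => g; rewrite gmulBr gmul1r evalB gmul_gelt_r hv.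
    have xr : gmul x (gelt (sigma * tau)%g) = - x.
      rewrite hx gmulA BE gmulBl gmul1l gelt_mul hrr.
      by rewrite -gmulNr opprB.
    have xs2 : x = gmul (gmul v (gelt sigma)) (gelt 1%g - gelt tau).
      rewrite -[LHS]opprK -xr xv gmulA gmulBl gmul1l gelt_mul mulgA htst.
      by rewrite -gmulNr opprB gmulA gmulBr gmul1r gelt_mul.
    have x2 : x *+ 2 = gmul (gmul v Ts) (gelt 1%g - gelt tau).
      by rewrite mulr2n {1}xv {1}xs2 -gmulDl TsE (gmulDr v (gelt 1%g) (gelt sigma)) gmul1r.
    have h0' : gmul y (gmul B Tt) = 0 by rewrite -gmulA -hx.
    have xd : x *+ d = gmul (gmul (gmul y Q) Ts) (gelt 1%g - gelt tau).
      by rewrite hx -gmulnr -K3 gmulDr h0' addr0 HK !gmulA.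
    exists (gmul (gmul y Q) Ts - gmul v Ts *+ m); split.
      by exists (gmul y Q - v *+ m); rewrite gmulBl gmulnl.
    by rewrite /d2 gmulBl gmulnl -xd -x2 -mulrnA mul2n /d mulrS addrK.
  move=> [z [[w ->] <-]].
  by rewrite /d3 /d2 !gmulA I4' !gmul0r.
split.
  move=> z [y ->]; exists (gmul y B); split; first by exists y.
  by rewrite /d3 gmulA.
split.
  by move=> x [y ->]; rewrite /h1 /d1 !gmulA GTT !gmulnr.
split.
  move=> x [y ->]; rewrite /d1 /h1 /d2.
  have -> : gmul (gmul y Ts) (gelt 1%g - gelt tau) = gmul (gmul y Ts) B.
    by rewrite !gmulA I2.
  rewrite h2E !gmulA K2 -gmulDr I1 addrC subrK gmulnr.
  by [].
split.
  by move=> x [y ->]; rewrite /d2 /h3 /d3 h2E !gmulA -gmulDr K3 gmulnr.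
by move=> x [y ->]; rewrite /d3 /h3 !gmulA GTT !gmulnr.
Qed.
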